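(* Let $N\geq2$ and $[\![N]\!]=\{1,\dots,N\}$. Let $x_1,\dots,x_N$ and $A_I$ ($I\subset[\![N]\!]$) be indeterminates, and let $K$ be the field of rational functions in them over $\mathbb{Q}$. For $k\in[\![N]\!]$ let $E_k$ be the map sending a tuple $(y_1,\dots,y_N)\in K^N$ with $y_k\neq0$ to $(y_1,\dots,y_{k-1},\overline{y_k},y_{k+1},\dots,y_N)$, where $$\overline{y_k}=\Big(\sum_{i\neq k}y_i^2+\sum_{I\subset[\![N]\!]\smallsetminus\{k\}}A_I\prod_{i\in I}y_i\Big)\Big/y_k .$$ Let $G$ be the group generated by the involutions $E_1,\dots,E_N$ acting (birationally) in this way. Then for every $g\in G$, each coordinate of $g\cdot(x_1,\dots,x_N)$ is a polynomial with integer coefficients in the variables $x_1^{\pm1},\dots,x_N^{\pm1}$ and $\{A_I\}_{I\subsetneq[\![N]\!]}$, the coefficients depending only on $g$.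
   Context: The maps $E_k$ are the birational involutions of $\mathbb{C}^N$ exchanging the two roots, in the $k$-th variable, of the Markoff-type equation $\sum_{i=1}^N X_i^2+\sum_{I\subset[\![N]\!]}A_I\prod_{i\in I}X_i=0$ (monic of degree $2$ in each variable); $G$ is the free product of $N$ copies of $\mathbb{Z}/2\mathbb{Z}$ acting through them. Note that $A_{[\![N]\!]}$ does not appear in the formula for any $E_k$. *)

(* Defs.v *)
From HB Require Import structures.
From mathcomp Require Import all_boot all_order all_algebra.
From mathcomp Require Import fraction.
From mathcomp Require Import mpoly.
Set Implicit Arguments.
Unset Strict Implicit.
Unset Printing Implicit Defensive.
Import Order.TTheory GRing.Theory Num.Theory.
Local Open Scope ring_scope.

(* Indeterminates: x_1..x_N and A_I for every I ⊂ [N] (all 2^N subsets).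
   Variable indices of the polynomial ring: 'I_(N + #|{set 'I_N}|). *)
Notation "x %:F" := (@FracField.tofrac _ x) : ring_scope.

Definition nvars (N : nat) : nat := (N + #|{set 'I_N}|)%N.

Definition xidx (N : nat) (i : 'I_N) : 'I_(nvars N) := lshift _ i.
Definition aidx (N : nat) (I : {set 'I_N}) : 'I_(nvars N) := rshift N (enum_rank I).

Definition K (N : nat) := {fraction {mpoly rat[nvars N]}}.

Definition xK (N : nat) (i : 'I_N) : K N := ('X_(xidx i))%:F.
Definition AK (N : nat) (I : {set 'I_N}) : K N := ('X_(aidx I))%:F.

Definition xvec (N : nat) : 'I_N -> K N := fun i => xK i.

Definition Ebar (N : nat) (k : 'I_N) (y : 'I_N -> K N) : K N :=
  (\sum_(i : 'I_N | i != k) y i ^+ 2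
   + \sum_(I : {set 'I_N} | k \notin I) AK I * \prod_(i in I) y i) / y k.

Definition Ek (N : nat) (k : 'I_N) (y : 'I_N -> K N) : option ('I_N -> K N) :=
  if y k == 0 then None
  else Some (fun j => if j == k then Ebar k y else y j).

(* An element of G (free product of N copies of Z/2) is a reduced word
   [:: k1; ...; km] (no two consecutive equal letters); it acts as
   E_{k1} o ... o E_{km}, the result being None if some division by 0
   occurs along the way. *)
Definition reduced_word (N : nat) (w : seq 'I_N) : bool :=
  sorted (fun a b : 'I_N => a != b) w.

Definition act (N : nat) (w : seq 'I_N) (y : 'I_N -> K N) : option ('I_N -> K N) :=
  foldr (fun k oy => obind (Ek k) oy) (Some y) w.

(* f lies in Z[x_1^{±1}, ..., x_N^{±1}, A_I (I ⊊ [N])]: f times some monomial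
   in the x_i is the image of an integer polynomial not involving A_[N]. *)
Definition int_laurent (N : nat) (f : K N) : Prop :=
  exists (P : {mpoly int[nvars N]}) (d : 'I_N -> nat),
    (forall m, m \in msupp P -> m (aidx [set: 'I_N]) = 0%N) /\
    f * \prod_(i : 'I_N) xK i ^+ d i
      = (map_mpoly (fun z : int => z%:~R : rat) P)%:F.

(* Main.v *)
Require Import Defs.
From HB Require Import structures.
From mathcomp Require Import all_boot all_order all_algebra.
From mathcomp Require Import fraction.
From mathcomp Require Import mpoly.
From mathcomp Require Import ring lra.
Set Implicit Arguments.
Unset Strict Implicit.
Unset Printing Implicit Defensive.
Import Order.TTheory GRing.Theory Num.Theory.
Local Open Scope ring_scope.

Lemma gfracD (F : fieldType) (a b c d : F) : d != 0 -> b != 0 ->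
  a / b + c / d = (a * d + c * b) / (b * d).
Proof. by move=> hd hb; field; apply/andP. Qed.
Lemma gfracM (F : fieldType) (a b c d : F) :
  a / b * (c / d) = (a * c) / (b * d).
Proof. by rewrite invfM mulrACA. Qed.

Lemma gsub (R : zmodType) (z b c L : R) : z + b + c = L -> z = L - b - c.
Proof. by move=> <-; rewrite -(addrA z b c) (addrC b c) addrA !addrK. Qed.

Lemma gfin (R : comRingType) (z b c L P : R) : z + b + c = L * P ->
  z ^+ 2 + z * b + z * c = L * (z * P).
Proof. by move=> h; rewrite mulrCA -h; ring. Qed.

Section S.
Variable N : nat.
Local Notation n := (nvars N).
Local Notation a := (aidx [set: 'I_N]).

Definition phi (P : {mpoly int[n]}) : K N :=
  (map_mpoly (fun z : int => z%:~R : rat) P)%:F.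

Lemma phiD P Q : phi (P + Q) = phi P + phi Q.
Proof. by rewrite /phi rmorphD /= tofracD. Qed.
Lemma phiM P Q : phi (P * Q) = phi P * phi Q.
Proof. by rewrite /phi rmorphM /= tofracM. Qed.
Lemma phiN P : phi (- P) = - phi P.
Proof. by rewrite /phi rmorphN /= tofracN. Qed.
Lemma phi0 : phi 0 = 0.
Proof. by rewrite /phi rmorph0 /= tofrac0. Qed.
Lemma phi1 : phi 1 = 1.
Proof. by rewrite /phi rmorph1 /= tofrac1. Qed.
Lemma phiX i : phi 'X_i = ('X_i)%:F.
Proof. by rewrite /phi map_mpolyX. Qed.

Definition good (P : {mpoly int[n]}) := forall m : 'X_{1..n}, m a != 0%N -> P@_m = 0.

Lemma good0 : good 0. Proof. by move=> m _; rewrite mcoeff0. Qed.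
Lemma goodD P Q : good P -> good Q -> good (P + Q).
Proof. by move=> hP hQ m hm; rewrite mcoeffD hP // hQ // addr0. Qed.
Lemma goodN P : good P -> good (- P).
Proof. by move=> hP m hm; rewrite mcoeffN hP // oppr0. Qed.
Lemma goodM P Q : good P -> good Q -> good (P * Q).
Proof.
move=> hP hQ m hm; rewrite mcoeffM big1 // => k /eqP km.
have := congr1 (fun mm : 'X_{1..n} => mm a) km; rewrite /= mnmDE => e.
move: hm; rewrite e.
case: (eqVneq ((k.1 : 'X_{1..n}) a) 0%N) => [->|h1] /= h2.
  by rewrite hQ ?mulr0.
by rewrite hP ?mul0r.
Qed.
Lemma good1 : good 1.
Proof. by move=> m hm; rewrite mcoeff1; case: eqP => // e; move: hm; rewrite e mnm0E. Qed.
Lemma goodX i : i != a -> good 'X_i.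
Proof.
move=> hi m hm; rewrite mcoeffX; case: eqP => // e; move: hm.
by rewrite -e mnm1E (negbTE hi).
Qed.

Lemma goodXn P k : good P -> good (P ^+ k).
Proof. by move=> hP; elim: k => [|k ih]; [rewrite expr0; exact: good1 | rewrite exprS; exact: goodM]. Qed.

Lemma xidx_neq i : xidx i != a.
Proof.
apply/eqP => /(congr1 val) /=; rewrite /xidx /aidx /= => e.
by have := ltn_ord i; rewrite e ltnNge leq_addr.
Qed.

Lemma aidx_neq I : I != [set: 'I_N] -> aidx I != a.
Proof.
move=> hI; apply/eqP => /(congr1 val) /= /eqP; rewrite eqn_add2l => /eqP e.
by move/eqP: hI; apply; apply: enum_rank_inj; apply: val_inj.
Qed.

Definition Mono (d : 'I_N -> nat) : {mpoly int[n]} :=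
  \prod_(i : 'I_N) 'X_(xidx i) ^+ d i.
Definition MK (d : 'I_N -> nat) : K N := \prod_(i : 'I_N) xK i ^+ d i.

Lemma goodMono d : good (Mono d).
Proof.
apply: big_ind => //; [exact: good1 | exact: goodM | ].
by move=> i _; apply/goodXn/goodX/xidx_neq.
Qed.

Lemma phiXn P k : phi (P ^+ k) = phi P ^+ k.
Proof. by elim: k => [|k ih]; [rewrite !expr0 phi1 | rewrite !exprS phiM ih]. Qed.

Lemma phiMono d : phi (Mono d) = MK d.
Proof.
rewrite /Mono /MK (big_morph phi phiM phi1); apply: eq_bigr => i _.
by rewrite phiXn phiX.
Qed.

Lemma MKD d e : MK (fun i => d i + e i)%N = MK d * MK e.
Proof. by rewrite /MK -big_split; apply: eq_bigr => i _; rewrite exprD. Qed.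

Definition IL (f : K N) := exists P d, good P /\ f * MK d = phi P.

Lemma IL_int f : IL f -> int_laurent f.
Proof.
move=> [P [d [hP e]]]; exists P, d; split => // m.
by rewrite mcoeff_msupp; apply: contraNeq => /hP ->.
Qed.

Lemma IL0 : IL 0.
Proof. by exists 0, (fun _ => 0%N); rewrite mul0r phi0; split => //; exact: good0. Qed.

Lemma ILD f g : IL f -> IL g -> IL (f + g).
Proof.
move=> [P [d [hP eP]]] [Q [e [hQ eQ]]].
exists (P * Mono e + Q * Mono d), (fun i => d i + e i)%N; split.
  by apply: goodD; apply: goodM => //; apply: goodMono.
by rewrite phiD !phiM !phiMono -eP -eQ MKD; ring.
Qed.

Lemma ILM f g : IL f -> IL g -> IL (f * g).
Proof.
move=> [P [d [hP eP]]] [Q [e [hQ eQ]]].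
exists (P * Q), (fun i => d i + e i)%N; split; first exact: goodM.
by rewrite phiM -eP -eQ MKD; ring.
Qed.

Lemma ILN f : IL f -> IL (- f).
Proof.
move=> [P [d [hP eP]]]; exists (- P), d; split; first exact: goodN.
by rewrite phiN -eP mulNr.
Qed.

Lemma IL1 : IL 1.
Proof. by exists 1, (fun _ => 0%N); rewrite phi1 /MK big1 ?mulr1 //; split => //; exact: good1. Qed.

Lemma ILx (i : 'I_N) : IL (xK i).
Proof.
exists 'X_(xidx i), (fun _ => 0%N); split; first exact/goodX/xidx_neq.
by rewrite phiX /MK big1 ?mulr1.
Qed.

Lemma ILA I : I != [set: 'I_N] -> IL (AK I).
Proof.
move=> hI; exists 'X_(aidx I), (fun _ => 0%N); split; first exact/goodX/aidx_neq.
by rewrite phiX /MK big1 ?mulr1.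
Qed.

Lemma xK_neq0 (i : 'I_N) : xK i != 0.
Proof.
rewrite /xK tofrac_eq0; apply/eqP => h.
have := @mcoeffX _ rat U_(xidx i) U_(xidx i).
by rewrite h mcoeff0 eqxx => /esym/eqP; rewrite oner_eq0.
Qed.

Lemma ILxV (i : 'I_N) : IL (xK i)^-1.
Proof.
exists 1, (fun j => (j == i) : nat); split; first exact: good1.
rewrite phi1 /MK (bigD1 i) //= eqxx expr1 big1 ?mulr1 ?mulVf ?xK_neq0 //.
by move=> j /negbTE ->.
Qed.

Lemma ILsum (I : finType) (P : pred I) (F : I -> K N) :
  (forall i, P i -> IL (F i)) -> IL (\sum_(i | P i) F i).
Proof. by move=> h; apply: big_ind => //; [exact: IL0 | exact: ILD]. Qed.

Lemma ILprod (I : finType) (P : pred I) (F : I -> K N) :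
  (forall i, P i -> IL (F i)) -> IL (\prod_(i | P i) F i).
Proof. by move=> h; apply: big_ind => //; [exact: IL1 | exact: ILM]. Qed.

Definition v1 : 'I_n -> rat := fun _ => 1.

Definition nn (f : K N) := exists p q : {mpoly rat[n]},
  [/\ 0 <= p.@[v1], 0 < q.@[v1] & f = p%:F / q%:F].
Definition ps (f : K N) := exists p q : {mpoly rat[n]},
  [/\ 0 < p.@[v1], 0 < q.@[v1] & f = p%:F / q%:F].

Lemma pos_neq0 (q : {mpoly rat[n]}) : 0 < q.@[v1] -> (q%:F : K N) != 0.
Proof.
by move=> h; rewrite tofrac_eq0; apply: contraTneq h => ->; rewrite meval0 ltxx.
Qed.

Lemma ps_nn f : ps f -> nn f.
Proof. by move=> [p [q [h1 h2 h3]]]; exists p, q; split => //; apply: ltW. Qed.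

Lemma ps_neq0 f : ps f -> f != 0.
Proof.
move=> [p [q [h1 h2 ->]]]; rewrite mulf_neq0 ?invr_eq0 //; exact: pos_neq0.
Qed.

Lemma nn0 : nn 0.
Proof. by exists 0, 1; rewrite meval0 meval1 tofrac0 mul0r; split. Qed.
Lemma ps1 : ps 1.
Proof. by exists 1, 1; rewrite meval1 tofrac1 divr1; split. Qed.

Lemma fracD (p1 q1 p2 q2 : {mpoly rat[n]}) : 0 < q1.@[v1] -> 0 < q2.@[v1] ->
  (p1%:F / q1%:F + p2%:F / q2%:F : K N) = (p1 * q2 + p2 * q1)%:F / (q1 * q2)%:F.
Proof.
move=> h1 h2; have := pos_neq0 h1; have := pos_neq0 h2.
rewrite tofracD !tofracM => hq2 hq1; exact: (gfracD _ _ hq2 hq1).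
Qed.
Lemma fracM (p1 q1 p2 q2 : {mpoly rat[n]}) :
  (p1%:F / q1%:F * (p2%:F / q2%:F) : K N) = (p1 * p2)%:F / (q1 * q2)%:F.
Proof. rewrite !tofracM; exact: gfracM. Qed.

Lemma nnD f g : nn f -> nn g -> nn (f + g).
Proof.
move=> [p1 [q1 [a1 b1 ->]]] [p2 [q2 [a2 b2 ->]]].
exists (p1 * q2 + p2 * q1), (q1 * q2); rewrite fracD //; split => //.
  by rewrite mevalD !mevalM addr_ge0 // mulr_ge0 // ltW.
by rewrite mevalM mulr_gt0.
Qed.
Lemma psD f g : ps f -> nn g -> ps (f + g).
Proof.
move=> [p1 [q1 [a1 b1 ->]]] [p2 [q2 [a2 b2 ->]]].
exists (p1 * q2 + p2 * q1), (q1 * q2); rewrite fracD //; split => //.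
  by rewrite mevalD !mevalM ltr_pwDl // ?mulr_gt0 // mulr_ge0 // ltW.
by rewrite mevalM mulr_gt0.
Qed.
Lemma nnM f g : nn f -> nn g -> nn (f * g).
Proof.
move=> [p1 [q1 [a1 b1 ->]]] [p2 [q2 [a2 b2 ->]]].
exists (p1 * p2), (q1 * q2); rewrite fracM; split => //;
 by rewrite mevalM ?mulr_gt0 ?mulr_ge0.
Qed.
Lemma psM f g : ps f -> ps g -> ps (f * g).
Proof.
move=> [p1 [q1 [a1 b1 ->]]] [p2 [q2 [a2 b2 ->]]].
exists (p1 * p2), (q1 * q2); rewrite fracM; split => //;
 by rewrite mevalM ?mulr_gt0.
Qed.
Lemma psV f : ps f -> ps f^-1.
Proof.
move=> [p [q [a b ->]]]; exists q, p; split => //.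
by rewrite invfM invrK mulrC.
Qed.
Lemma nnsum (I : finType) (P : pred I) (F : I -> K N) :
  (forall i, P i -> nn (F i)) -> nn (\sum_(i | P i) F i).
Proof. by move=> h; apply: big_ind => //; [exact: nn0 | exact: nnD]. Qed.
Lemma psprod (I : finType) (P : pred I) (F : I -> K N) :
  (forall i, P i -> ps (F i)) -> ps (\prod_(i | P i) F i).
Proof. by move=> h; apply: big_ind => //; [exact: ps1 | exact: psM]. Qed.
Lemma psX (i : 'I_n) : ps (('X_i)%:F).
Proof. by exists 'X_i, 1; rewrite mevalXU meval1 tofrac1 divr1; split. Qed.

Definition Phi (y : 'I_N -> K N) : K N :=
  \sum_(i : 'I_N) y i ^+ 2
  + \sum_(I : {set 'I_N} | I != [set: 'I_N]) AK I * \prod_(i in I) y i.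
Definition Bk (k : 'I_N) (y : 'I_N -> K N) : K N :=
  \sum_(I : {set 'I_N} | (I != [set: 'I_N]) && (k \in I))
     AK I * \prod_(i in I | i != k) y i.
Definition Ck (k : 'I_N) (y : 'I_N -> K N) : K N :=
  \sum_(i : 'I_N | i != k) y i ^+ 2
   + \sum_(I : {set 'I_N} | k \notin I) AK I * \prod_(i in I) y i.
Definition Pk (k : 'I_N) (y : 'I_N -> K N) : K N := \prod_(i : 'I_N | i != k) y i.

Lemma EbarE k y : Ebar k y = Ck k y / y k.
Proof. by []. Qed.

Lemma prodE k (y : 'I_N -> K N) : \prod_i y i = y k * Pk k y.
Proof. by rewrite /Pk (bigD1 k). Qed.

Lemma PhiE k y : Phi y = y k ^+ 2 + y k * Bk k y + Ck k y.
Proof.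
rewrite /Phi /Ck (bigD1 k) //= (bigID (fun I : {set 'I_N} => k \in I)) /=.
have -> : \sum_(I : {set 'I_N} | (I != [set: 'I_N]) && (k \notin I))
     AK I * \prod_(i in I) y i
   = \sum_(I : {set 'I_N} | k \notin I) AK I * \prod_(i in I) y i.
  apply: eq_bigl => I; case: (boolP (k \in I)) => hk; rewrite ?andbF ?andbT //.
  by apply: contraNneq hk => ->; rewrite inE.
rewrite /Bk big_distrr /=.
have -> : \sum_(I : {set 'I_N} | (I != [set: 'I_N]) && (k \in I))
     AK I * \prod_(i in I) y i
   = \sum_(I : {set 'I_N} | (I != [set: 'I_N]) && (k \in I))
     y k * (AK I * \prod_(i in I | i != k) y i).
  apply: eq_bigr => I /andP [_ hk]; rewrite (bigD1 k) //=.
  by rewrite mulrCA.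
rewrite -!addrA; congr (_ + _).
exact: addrCA.
Qed.

Lemma Bk_eq k (y z : 'I_N -> K N) : (forall j, j != k -> y j = z j) -> Bk k y = Bk k z.
Proof.
move=> h; apply: eq_bigr => I _; congr (_ * _); apply: eq_bigr => i /andP [_ hi].
exact: h.
Qed.
Lemma Ck_eq k (y z : 'I_N -> K N) : (forall j, j != k -> y j = z j) -> Ck k y = Ck k z.
Proof.
move=> h; rewrite /Ck; congr (_ + _).
  by apply: eq_bigr => i hi; rewrite h.
apply: eq_bigr => I hk; congr (_ * _); apply: eq_bigr => i hi; apply: h.
by apply: contraNneq hk => <-.
Qed.
Lemma Pk_eq k (y z : 'I_N -> K N) : (forall j, j != k -> y j = z j) -> Pk k y = Pk k z.
Proof. by move=> h; apply: eq_bigr => i hi; rewrite h. Qed.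

Definition lam : K N := Phi (@xvec N) * \prod_(i : 'I_N) (xK i)^-1.

Lemma ILX2 f : IL f -> IL (f ^+ 2).
Proof. by move=> h; rewrite expr2; apply: ILM. Qed.

Lemma ILPhi y : (forall i, IL (y i)) -> IL (Phi y).
Proof.
move=> h; apply: ILD; first by apply: ILsum => i _; apply: ILX2.
apply: ILsum => I hI; apply: ILM; first exact: ILA.
by apply: ILprod => i _.
Qed.
Lemma ILBk k y : (forall i, IL (y i)) -> IL (Bk k y).
Proof.
move=> h; apply: ILsum => I /andP [hI _]; apply: ILM; first exact: ILA.
by apply: ILprod => i _.
Qed.
Lemma ILPk k y : (forall i, IL (y i)) -> IL (Pk k y).
Proof. by move=> h; apply: ILprod => i _. Qed.

Lemma ILlam : IL lam.
Proof.
apply: ILM; first by apply: ILPhi => i; apply: ILx.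
by apply: ILprod => i _; apply: ILxV.
Qed.

Definition Inv (y : 'I_N -> K N) :=
  [/\ forall i, ps (y i), forall i, IL (y i) & Phi y = lam * \prod_i y i].

Lemma psAK I : ps (AK I).
Proof. exact: psX. Qed.

Lemma psCk k y : (exists j, j != k) -> (forall i, ps (y i)) -> ps (Ck k y).
Proof.
move=> [j hj] h; rewrite /Ck (bigD1 j) //= -addrA; apply: psD.
  by apply: psM.
apply: nnD; first by apply: nnsum => i _; apply: ps_nn; apply: psM.
apply: nnsum => I _; apply: ps_nn; apply: psM; first exact: psAK.
by apply: psprod.
Qed.

Lemma step k y : (exists j, j != k) -> Inv y ->
  exists y', Ek k y = Some y' /\ Inv y'.
Proof.
move=> hj [hps hil hphi].
have yk0 := ps_neq0 (hps k).
pose z := Ebar k y.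
have hC : Ck k y = z * y k by rewrite /z EbarE divfK.
have hz : z + Bk k y + y k = lam * Pk k y.
  apply: (mulfI yk0).
  have e := hphi; rewrite (PhiE k) (prodE k) hC in e.
  rewrite mulrCA -e; ring.
pose y' := fun j => if j == k then z else y j.
have off : forall j, j != k -> y' j = y j by move=> j /negbTE hjk; rewrite /y' hjk.
have yk' : y' k = z by rewrite /y' eqxx.
exists y'; rewrite /Ek (negbTE yk0); split; first by [].
split.
- move=> j; rewrite /y'; case: eqP => _; last exact: hps.
  by rewrite /z EbarE; apply: psM; [apply: psCk | apply: psV].
- move=> j; rewrite /y'; case: eqP => _; last exact: hil.
  have -> : z = lam * Pk k y - Bk k y - y k := gsub hz.
  apply: ILD; last exact/ILN.
  apply: ILD; last by apply/ILN/ILBk.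
  by apply: ILM; [exact: ILlam | apply: ILPk].
- rewrite (PhiE k) (prodE k) yk' (Bk_eq off) (Ck_eq off) (Pk_eq off) hC.
  exact: gfin hz.
Qed.

Lemma main w : (exists j : 'I_N, True /\ forall k : 'I_N, exists j, j != k) ->
  exists y, act w (@xvec N) = Some y /\ Inv y.
Proof.
move=> [_ [_ hj]].
elim: w => [|k w [y [hy hinv]]].
  exists (@xvec N); split; first by [].
  split; [move=> i; exact: psX | move=> i; exact: ILx | ].
  rewrite /lam -mulrA -big_split /= big1 ?mulr1 //.
  by move=> i _; rewrite mulVf // xK_neq0.
have -> : act (k :: w) (@xvec N) = obind (Ek k) (act w (@xvec N)) by [].
by rewrite hy /=; apply: step.
Qed.
End S.

Theorem proposition11 (N : nat) (hN : (2 <= N)%N) (w : seq 'I_N) :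
  reduced_word w ->
  exists y : 'I_N -> K N,
    act w (@xvec N) = Some y /\ forall i : 'I_N, int_laurent (y i).
Proof.
move=> _.
have h0 : (0 < N)%N by apply: leq_trans hN.
have h1 : (1 < N)%N by [].
have hj : forall k : 'I_N, exists j, j != k.
  move=> k; case: (eqVneq k (Ordinal h0)) => e.
    by exists (Ordinal h1); rewrite e; apply/eqP => /(congr1 val).
  by exists (Ordinal h0); rewrite eq_sym.
have [y [hy [_ hil _]]] := main w (ex_intro _ (Ordinal h0) (conj I hj)).
by exists y; split => // i; apply: IL_int.
Qed.
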